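(* Let $d\ge2$, let $\mathfrak{F}$ be a field or an ordered field with universe $F$, and let $\mathcal{L}$ be the language of $\mathfrak{F}$ (the language of fields, resp. of ordered fields). Let $\Delta$ be a finite subset of $\mathcal{R}Symb_{\mathcal{L}}$ such that $\mathcal{G}_\Delta(\mathfrak{F})$ is a coordinate geometry over $\mathfrak{F}$, and let $R\in\mathcal{R}Symb_{\mathcal{L}}$. Then $\mathfrak{F}\models\forall\hat e_0\dots\forall\hat e_d\,(\theta_\Delta(\hat e_0,\dots,\hat e_d)\rightarrow\theta_R(\hat e_0,\dots,\hat e_d))$ if and only if every affine automorphism of $\mathcal{G}_\Delta(\mathfrak{F})$ is an affine automorphism of $\mathcal{G}_{\Delta\cup\{R\}}(\mathfrak{F})$.
   Context: Fix variables $v_1,v_2,\dots$. $\mathcal{R}Symb_{\mathcal{L}}$ is the set of pairs $\langle\varrho,n\rangle$ with $n\ge1$ and $\varrho$ an $\mathcal{L}$-formula whose free variables are among $v_1,\dots,v_{dn}$. For $R=\langle\varrho,n\rangle$, define the $n$-ary relation $R_{\mathfrak{F}d}$ on $F^d$ by $(\vec p_1,\dots,\vec p_n)\in R_{\mathfrak{F}d}$ iff $\mathfrak{F}\models\varrho[p_{11},\dots,p_{1d},\dots,p_{n1},\dots,p_{nd}]$, where $\vec p_i=\langle p_{i1},\dots,p_{id}\rangle$. For $\Delta\subseteq\mathcal{R}Symb_{\mathcal{L}}$, $\mathcal{G}_\Delta(\mathfrak{F})$ is the model with universe $F^d$ having, for each $R=\langle\varrho,n\rangle\in\Delta$, an $n$-ary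 relation symbol interpreted as $R_{\mathfrak{F}d}$. A coordinate geometry over a field (resp. ordered field) $\mathfrak{F}$ is a model with universe $F^d$, only relation symbols, in which (parameter-free) ${\mathsf{Col}}$ (resp. ${\mathsf{Bw}}$) is first-order definable, where ${\mathsf{Col}}(\vec p,\vec q,\vec r)$ iff $\vec q=\vec p+\lambda(\vec r-\vec p)$ for some $\lambda\in F$ or $\vec r=\vec p$, and ${\mathsf{Bw}}(\vec p,\vec q,\vec r)$ iff $\vec q=\vec p+\lambda(\vec r-\vec p)$ for some $\lambda\in[0,1]$. An affine transformation of $F^d$ is an invertible linear map followed by a translation; an affine automorphism of a model with universe $F^d$ is an automorphism that is an affine transformation. Formulas: $\hat x$ denotes a block of $d$ variables $x_1,\dots,x_d$ viewed as a vector $\vec x$. $\iota(\hat e_0,\dots,\hat e_d)$ is $\forall\lambda_1\dots\forall\lambda_d(\sum_{i=1}^d\lambda_i(\vec e_i-\vec e_0)=\vec 0\rightarrow\bigwedge_{i=1}^d\lambda_i=0)$. $\theta(\hat e_0,\dots,\hat e_d,\hat x,\hat y)$ is $\vec y=\vec e_0+\sum_{i=1}^d x_i(\vec e_i-\vec e_0)$ (componentwise). For $R=\langle\varrho,n\rangle$, $\theta_R(\hat e_0,\dots,\hat e_d)$ is $\iota(\hat e_0,\dots,\hat e_d)\wedge\forall\hat x_1\dots\forall\hat x_n\forall\hat y_1\dots\forall\hat y_n\big((\bigwedge_{i=1}^n\theta(\hat e_0,\dots,\hat e_d,\hat x_i,\hat y_i))\rightarrow(\varrho(\hat x_1,\dots,\hat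 x_n)\leftrightarrow\varrho(\hat y_1,\dots,\hat y_n))\big)$, where $\varrho(\hat x_1,\dots,\hat x_n)$ means $\varrho$ with $v_1,\dots,v_{dn}$ replaced by the components of $\hat x_1,\dots,\hat x_n$ in order. For finite $\Delta$, $\theta_\Delta=\bigwedge_{R\in\Delta}\theta_R$. *)

(* Defs.v *)
From Stdlib Require List.
From HB Require Import structures.
From mathcomp Require Import all_boot all_order all_algebra.
Set Implicit Arguments. Unset Strict Implicit. Unset Printing Implicit Defensive.
Import Order.TTheory GRing.Theory Num.Theory.
Local Open Scope ring_scope.

(* Variables are v_k, k : nat (the paper uses v_1, v_2, ...). *)
Inductive fterm : Type :=
  | TVar of nat | TZero | TOne
  | TAdd of fterm & fterm | TMul of fterm & fterm | TOpp of fterm.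

Inductive fform : Type :=
  | FEq of fterm & fterm
  | FLe of fterm & fterm
  | FFalse
  | FNot of fform | FAnd of fform & fform | FOr of fform & fform
  | FImp of fform & fform
  | FAll of nat & fform | FEx of nat & fform.

Inductive lang := LField | LOrdField.

Fixpoint le_free (f : fform) : bool :=
  match f with
  | FLe _ _ => false
  | FEq _ _ | FFalse => true
  | FNot g | FAll _ g | FEx _ g => le_free g
  | FAnd g h | FOr g h | FImp g h => le_free g && le_free h
  end.

Definition in_lang (L : lang) (f : fform) : bool :=
  if L is LField then le_free f else true.

Fixpoint fv_term (t : fterm) : seq nat :=
  match t with
  | TVar k => [:: k]
  | TZero | TOne => [::]
  | TAdd s u | TMul s u => fv_term s ++ fv_term u
  | TOpp s => fv_term s
  end.

Fixpoint fv_form (f : fform) : seq nat :=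
  match f with
  | FEq s t | FLe s t => fv_term s ++ fv_term t
  | FFalse => [::]
  | FNot g => fv_form g
  | FAnd g h | FOr g h | FImp g h => fv_form g ++ fv_form h
  | FAll k g | FEx k g => [seq j <- fv_form g | j != k]
  end.

Definition upd {T : Type} (v : nat -> T) (k : nat) (a : T) : nat -> T :=
  fun j => if j == k then a else v j.

Section FieldSemantics.
Variables (F : fieldType) (le : F -> F -> Prop).

Fixpoint tval (v : nat -> F) (t : fterm) : F :=
  match t with
  | TVar k => v k
  | TZero => 0
  | TOne => 1
  | TAdd s u => tval v s + tval v u
  | TMul s u => tval v s * tval v u
  | TOpp s => - tval v s
  end.

Fixpoint fsat (v : nat -> F) (f : fform) : Prop :=
  match f with
  | FEq s t => tval v s = tval v t
  | FLe s t => le (tval v s) (tval v t)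
  | FFalse => False
  | FNot g => ~ fsat v g
  | FAnd g h => fsat v g /\ fsat v h
  | FOr g h => fsat v g \/ fsat v h
  | FImp g h => fsat v g -> fsat v h
  | FAll k g => forall a : F, fsat (upd v k a) g
  | FEx k g => exists a : F, fsat (upd v k a) g
  end.
End FieldSemantics.

Record rsym := RSym { rs_form : fform; rs_ar : nat }.

Definition valid_rsym (L : lang) (d : nat) (R : rsym) : bool :=
  [&& in_lang L (rs_form R), (0 < rs_ar R)%N &
      all (fun k => (1 <= k <= d * rs_ar R)%N) (fv_form (rs_form R))].

Section Geometry.
Variables (F : fieldType) (le : F -> F -> Prop) (d : nat).

Notation point := 'rV[F]_d.

(* valuation v_{(i-1)d + j} := p_{ij}  (1-indexed i,j), i.e. v_{k'+1} is
   coordinate (k' %% d) of point (k' %/ d), both 0-indexed *)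
Definition val_of (n : nat) (ps : 'I_n -> point) (k : nat) : F :=
  match k with
  | 0 => 0
  | k'.+1 =>
      match insub (k' %/ d)%N, insub (k' %% d)%N with
      | Some i, Some j => ps i 0 j
      | _, _ => 0
      end
  end.

Definition relF (R : rsym) (ps : 'I_(rs_ar R) -> point) : Prop :=
  fsat le (val_of ps) (rs_form R).

(* GRel k args : the k-th symbol of Delta applied to the variables args *)
Inductive gform : Type :=
  | GEq of nat & nat
  | GRel of nat & seq nat
  | GFalse
  | GNot of gform | GAnd of gform & gform | GOr of gform & gform
  | GImp of gform & gform
  | GAll of nat & gform | GEx of nat & gform.

Fixpoint gsat (Delta : seq rsym) (v : nat -> point) (f : gform) : Prop :=
  match f with
  | GEq i j => v i = v j
  | GRel k args =>
      match List.nth_error Delta k with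
      | Some R => size args = rs_ar R /\
                  relF (fun i : 'I_(rs_ar R) => v (nth 0%N args i))
      | None => False
      end
  | GFalse => False
  | GNot g => ~ gsat Delta v g
  | GAnd g h => gsat Delta v g /\ gsat Delta v h
  | GOr g h => gsat Delta v g \/ gsat Delta v h
  | GImp g h => gsat Delta v g -> gsat Delta v h
  | GAll k g => forall a : point, gsat Delta (upd v k a) g
  | GEx k g => exists a : point, gsat Delta (upd v k a) g
  end.

Definition fo_definable3 (Delta : seq rsym) (B : point -> point -> point -> Prop) :=
  exists phi : gform, forall v : nat -> point,
      B (v 0%N) (v 1%N) (v 2%N) <-> gsat Delta v phi.

Definition Col (p q r : point) : Prop :=
  (exists lam : F, q = p + lam *: (r - p)) \/ r = p.

Definition is_affine (f : point -> point) : Prop :=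
  exists (M : 'M[F]_d) (b : point), M \in unitmx /\ forall x, f x = x *m M + b.

Definition is_aut (Delta : seq rsym) (f : point -> point) : Prop :=
  bijective f /\
  forall R, List.In R Delta ->
    forall ps : 'I_(rs_ar R) -> point, relF ps <-> relF (f \o ps).

Definition affine_aut (Delta : seq rsym) (f : point -> point) : Prop :=
  is_affine f /\ is_aut Delta f.

Definition iota (e : 'I_d.+1 -> point) : Prop :=
  forall lam : 'I_d -> F,
    \sum_(i < d) lam i *: (e (lift ord0 i) - e ord0) = 0 -> forall i, lam i = 0.

Definition theta (e : 'I_d.+1 -> point) (x y : point) : Prop :=
  y = e ord0 + \sum_(i < d) x 0 i *: (e (lift ord0 i) - e ord0).

Definition theta_R (R : rsym) (e : 'I_d.+1 -> point) : Prop :=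
  iota e /\
  forall xs ys : 'I_(rs_ar R) -> point,
    (forall i, theta e (xs i) (ys i)) -> (relF xs <-> relF ys).

(* theta_Delta = conjunction of the theta_R, R in Delta (the conjunct iota
   is added explicitly; it is already implied when Delta is non-empty) *)
Definition theta_Delta (Delta : seq rsym) (e : 'I_d.+1 -> point) : Prop :=
  iota e /\ forall R, List.In R Delta -> theta_R R e.

End Geometry.

Definition Bw (F : realFieldType) (d : nat) (p q r : 'rV[F]_d) : Prop :=
  exists lam : F, 0 <= lam <= 1 /\ q = p + lam *: (r - p).

(* interpretation of <= : irrelevant for le-free formulas *)
Definition no_le (F : fieldType) : F -> F -> Prop := fun _ _ => False.
Definition real_le (F : realFieldType) : F -> F -> Prop := fun x y => x <= y.

(* Main.v *)
Require Import Defs.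
From HB Require Import structures.
From mathcomp Require Import all_boot all_order all_algebra.
From Stdlib Require Import FunctionalExtensionality.
Set Implicit Arguments. Unset Strict Implicit. Unset Printing Implicit Defensive.
Import Order.TTheory GRing.Theory Num.Theory.
Local Open Scope ring_scope.

Section Gen.
Variables (F : fieldType) (le : F -> F -> Prop) (d : nat).

Definition frameM (e : 'I_d.+1 -> 'rV[F]_d) : 'M[F]_d :=
  \matrix_(i < d) (e (lift ord0 i) - e ord0).

Lemma frame_sum (e : 'I_d.+1 -> 'rV[F]_d) (x : 'rV[F]_d) :
  \sum_(i < d) x 0 i *: (e (lift ord0 i) - e ord0) = x *m frameM e.
Proof. by rewrite mulmx_sum_row; apply: eq_bigr => i _; rewrite rowK. Qed.

Lemma iotaU (e : 'I_d.+1 -> 'rV[F]_d) : Defs.iota e <-> frameM e \in unitmx.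
Proof.
split.
- move=> H; rewrite unitmxE unitfE; apply/negP => /det0P [v vn0 vM].
  move/negP: vn0; apply; apply/eqP/rowP => j; rewrite mxE.
  apply: (H (fun i => v 0 i)); by rewrite frame_sum.
- move=> U lam.
  set v : 'rV[F]_d := \row_i lam i.
  have -> : \sum_(i < d) lam i *: (e (lift ord0 i) - e ord0)
          = \sum_(i < d) v 0 i *: (e (lift ord0 i) - e ord0).
    by apply: eq_bigr => i _; rewrite mxE.
  rewrite frame_sum => H i.
  have : v = 0 by rewrite -(mulmxK U v) H mul0mx.
  by move/rowP/(_ i); rewrite !mxE.
Qed.

Lemma affine_bij (M : 'M[F]_d) (b : 'rV[F]_d) : M \in unitmx ->
  bijective (fun x => x *m M + b).
Proof.
move=> U; exists (fun y => (y - b) *m invmx M) => x.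
  by rewrite addrK mulmxK.
by rewrite mulmxKV // subrK.
Qed.

Lemma gen (Delta : seq rsym) (R : rsym) :
  (forall e : 'I_d.+1 -> 'rV[F]_d, theta_Delta le Delta e -> theta_R le R e)
  <->
  (forall f : 'rV[F]_d -> 'rV[F]_d, affine_aut le Delta f -> affine_aut le (R :: Delta) f).
Proof.
split.
- move=> H f [[M [b [U Hf]]] [bij Haut]].
  pose e (k : 'I_d.+1) : 'rV[F]_d :=
    (if unlift ord0 k is Some i then row i M else 0) + b.
  have e0 : e ord0 = b by rewrite /e unlift_none add0r.
  have ei : forall i, e (lift ord0 i) - e ord0 = row i M.
    by move=> i; rewrite e0 /e liftK addrK.
  have fM : frameM e = M by apply/row_matrixP => i; rewrite rowK ei.
  have th : forall x, theta e x (f x).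
    by move=> x; rewrite /theta frame_sum fM Hf e0 addrC.
  have io : Defs.iota e by apply/iotaU; rewrite fM.
  have tD : theta_Delta le Delta e.
    split => // R' inR; split => // xs ys Hxy.
    have -> : ys = f \o xs.
      apply: functional_extensionality => i; rewrite (Hxy i) /=.
      by rewrite -th.
    exact: Haut.
  have [_ tR] := H e tD.
  split; first by exists M, b.
  split => // R' [<-|inR] ps; last exact: Haut.
  apply: tR => i; exact: th.
- move=> H e [io tD].
  pose f x := x *m frameM e + e ord0.
  have U := proj1 (iotaU e) io.
  have th : forall x, theta e x (f x).
    by move=> x; rewrite /theta frame_sum /f addrC.
  have aD : affine_aut le Delta f.
    split; first by exists (frameM e), (e ord0).
    split; first exact: affine_bij.
    move=> R' inR ps; have [_ tR] := tD R' inR; apply: tR => i; exact: th.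
  have [_ [_ aR]] := H f aD.
  split => // xs ys Hxy.
  have -> : ys = f \o xs.
    apply: functional_extensionality => i; rewrite (Hxy i) /=.
    by rewrite -th.
  by apply: aR; left.
Qed.
End Gen.

Theorem lemma5 :
  (* case 1: F a field, L the language of fields *)
  (forall (F : fieldType) (d : nat) (Delta : seq rsym) (R : rsym),
      (2 <= d)%N ->
      all (valid_rsym LField d) Delta ->
      valid_rsym LField d R ->
      fo_definable3 (@no_le F) Delta (@Col F d) ->
      ((forall e : 'I_d.+1 -> 'rV[F]_d,
          theta_Delta (@no_le F) Delta e -> theta_R (@no_le F) R e)
       <->
       (forall f : 'rV[F]_d -> 'rV[F]_d,
          affine_aut (@no_le F) Delta f -> affine_aut (@no_le F) (R :: Delta) f)))
  /\
  (* case 2: F an ordered field, L the language of ordered fields *)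
  (forall (F : realFieldType) (d : nat) (Delta : seq rsym) (R : rsym),
      (2 <= d)%N ->
      all (valid_rsym LOrdField d) Delta ->
      valid_rsym LOrdField d R ->
      fo_definable3 (@real_le F) Delta (@Bw F d) ->
      ((forall e : 'I_d.+1 -> 'rV[F]_d,
          theta_Delta (@real_le F) Delta e -> theta_R (@real_le F) R e)
       <->
       (forall f : 'rV[F]_d -> 'rV[F]_d,
          affine_aut (@real_le F) Delta f -> affine_aut (@real_le F) (R :: Delta) f))).
Proof.
split=> F d Delta R _ _ _ _; exact: gen.
Qed.
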